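(* Let $a<b$ be real numbers and let $\gamma:[a,b]\to\mathbb{E}^2$ be a regular smooth parametric curve, i.e. $\gamma$ has a continuous derivative vector $\gamma'(t)$ on $[a,b]$ with $\gamma'(t)\neq0$ for all $t\in[a,b]$. For $t\in[a,b]$ let $L(t)$ be the length of the arc of $\gamma$ corresponding to parameter values in $[a,t]$. For $t\in(a,b)$ let $T(t)$ be the set of $\tau\in(a,t]$ such that the vector $\gamma'(\tau)$ is collinear to the vector $\gamma(t)-\gamma(a)$. Then $$\varlimsup_{t\to a}\frac{\sup\{L(\tau)\,:\,\tau\in T(t)\}}{L(t)}\ \geq\ \frac1e.$$
   Context: Any vector is considered collinear to the zero vector, so $T(t)=(a,t]$ when $\gamma(t)=\gamma(a)$. Derivatives at the endpoints $a$ and $b$ are one-sided. Limits at $a$ are right-hand limits. *)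

(* Defs.v *)
From Stdlib Require Import Reals.
From Coquelicot Require Import Coquelicot.
Open Scope R_scope.

Definition in_Icc (a b t : R) : Prop := a <= t <= b.

Definition has_deriv_on (a b : R) (f : R -> R) (t df : R) : Prop :=
  filterlim (fun s => (f s - f t) / (s - t))
    (within (fun s => in_Icc a b s /\ s <> t) (locally t)) (locally df).

Definition cont_on (a b : R) (g : R -> R) (t : R) : Prop :=
  filterlim g (within (in_Icc a b) (locally t)) (locally (g t)).

(* Collinearity of plane vectors u = (u1,u2), v = (v1,v2): linear dependence.
   (The zero vector is collinear to every vector.) *)
Definition collinear (u1 u2 v1 v2 : R) : Prop :=
  exists al be : R, (al <> 0 \/ be <> 0) /\ al * u1 + be * v1 = 0 /\ al * u2 + be * v2 = 0.

Definition arclen (dx dy : R -> R) (a t : R) : R :=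
  RInt (fun s => sqrt (dx s ^ 2 + dy s ^ 2)) a t.

Definition Tset (x y dx dy : R -> R) (a t tau : R) : Prop :=
  a < tau <= t /\ collinear (dx tau) (dy tau) (x t - x a) (y t - y a).

Definition supLT (x y dx dy : R -> R) (a t : R) : Rbar :=
  Lub_Rbar (fun r => exists tau, Tset x y dx dy a t tau /\ r = arclen dx dy a tau).

Definition limsup_right (f : R -> Rbar) (a b : R) : Rbar :=
  Glb_Rbar (fun s => exists delta, 0 < delta /\
     s = Lub_Rbar (fun r => exists t, a < t < Rmin b (a + delta) /\ Finite r = f t)).

(* Main.v *)
Require Import Defs.
From Stdlib Require Import Reals Lra Ranalysis5 Classical.
From Coquelicot Require Import Coquelicot.
Open Scope R_scope.


Lemma der_minus f g x df dg : is_derive f x df -> is_derive g x dg ->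
  is_derive (fun t => f t - g t) x (df - dg).
Proof. intros; exact (is_derive_minus f g x df dg H H0). Qed.
Lemma der_plus f g x df dg : is_derive f x df -> is_derive g x dg ->
  is_derive (fun t => f t + g t) x (df + dg).
Proof. intros; exact (is_derive_plus f g x df dg H H0). Qed.
Lemma der_opp f x df : is_derive f x df -> is_derive (fun t => - f t) x (- df).
Proof. intros; exact (is_derive_opp f x df H). Qed.
Lemma der_cont f x l : is_derive f x l -> continuity_pt f x.
Proof. intros H. apply continuity_pt_filterlim.
  apply (ex_derive_continuous (K:=R_AbsRing) (V:=R_NormedModule)). exists l; exact H. Qed.

Lemma mono F dF l r : l <= r ->
  (forall x, l < x < r -> is_derive F x (dF x)) ->
  (forall x, l <= x <= r -> continuity_pt F x) ->
  (forall x, l <= x <= r -> 0 <= dF x) -> F l <= F r.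
Proof.
  intros Hlr Hd Hc Hp. destruct (MVT_gen F l r dF) as [c [Hc1 Hc2]].
  - intros x; rewrite Rmin_left, Rmax_right; auto.
  - intros x; rewrite Rmin_left, Rmax_right; auto.
  - rewrite Rmin_left, Rmax_right in Hc1 by auto.
    specialize (Hp c Hc1). nra.
Qed.

Lemma smono F dF l r : l < r ->
  (forall x, l < x < r -> is_derive F x (dF x)) ->
  (forall x, l <= x <= r -> continuity_pt F x) ->
  (forall x, l <= x <= r -> 0 < dF x) -> F l < F r.
Proof.
  intros Hlr Hd Hc Hp. destruct (MVT_gen F l r dF) as [c [Hc1 Hc2]].
  - intros x; rewrite Rmin_left, Rmax_right; auto; lra.
  - intros x; rewrite Rmin_left, Rmax_right; auto; lra.
  - rewrite Rmin_left, Rmax_right in Hc1 by lra.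
    specialize (Hp c Hc1). nra.
Qed.

Lemma nosign f l r : l <= r ->
  (forall x, l <= x <= r -> continuity_pt f x) ->
  (forall x, l <= x <= r -> f x <> 0) -> 0 < f r -> 0 < f l.
Proof.
  intros Hlr Hc Hn Hr. destruct (Rlt_or_le 0 (f l)) as [H|H]; auto.
  assert (f l < 0) by (assert (f l <> 0) by (apply Hn; lra); lra).
  destruct (Req_dec l r) as [->|Hne]; [lra|].
  destruct (IVT_interv f l r) as [z [Hz1 Hz2]]; auto; try lra.
  exfalso; apply (Hn z Hz1 Hz2).
Qed.

Lemma nosign' f l r : l <= r ->
  (forall x, l <= x <= r -> continuity_pt f x) ->
  (forall x, l <= x <= r -> f x <> 0) -> 0 < f l -> 0 < f r.
Proof.
  intros Hlr Hc Hn Hl. destruct (Rlt_or_le 0 (f r)) as [H|H]; auto.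
  assert (f r < 0) by (assert (f r <> 0) by (apply Hn; lra); lra).
  set (g := fun x => - f x).
  destruct (Req_dec l r) as [->|Hne]; [lra|].
  destruct (IVT_interv g l r) as [z [Hz1 Hz2]]; auto; try (unfold g; lra).
  intros x Hx; apply (continuity_pt_opp f x (Hc x Hx)).
  exfalso; apply (Hn z Hz1); unfold g in Hz2; lra.
Qed.

Lemma cont_eps f x : continuity_pt f x -> forall e, 0 < e ->
  exists d, 0 < d /\ forall y, Rabs (y - x) < d -> Rabs (f y - f x) < e.
Proof.
  intros H e He. destruct (H e He) as [d [Hd H']]. exists d; split; auto.
  intros y Hy. destruct (Req_dec y x) as [->|Hne].
  - rewrite Rminus_eq_0, Rabs_R0; auto.
  - apply (H' y). split. split; [exact I| auto]. exact Hy.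
Qed.

Section CoreSec.
Variables (a B c1 c2 : R) (p q P Q : R -> R).
Hypothesis HaB : a < B.
Hypothesis Hc1 : 0 < c1.
Hypothesis Hc12 : c1 < c2.
Hypothesis Hc2e : c2 * exp 1 < 1.
Hypothesis Hcp : forall t, a <= t <= B -> continuity_pt p t.
Hypothesis Hcq : forall t, a <= t <= B -> continuity_pt q t.
Hypothesis HcP : forall t, a <= t <= B -> continuity_pt P t.
Hypothesis HcQ : forall t, a <= t <= B -> continuity_pt Q t.
Hypothesis Hdp : forall t, a < t < B -> is_derive p t (P t).
Hypothesis Hdq : forall t, a < t < B -> is_derive q t (Q t).
Hypothesis HP : forall t, a <= t <= B -> 0 < P t.
Hypothesis Hpa : p a = 0.
Hypothesis Hqa : q a = 0.
Hypothesis HQa : Q a = 0.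
Hypothesis Hyp : forall t xi, a < t < B -> a < xi <= t -> c1 * p t < p xi ->
  Q xi * p t <> q t * P xi.

Let h t := Q t / P t.
Let A t := q t / p t.
Let D t := h t - A t.

Lemma e_gt1 : 1 < exp 1.
Proof. pose proof (exp_increasing 0 1 ltac:(lra)) as H; rewrite exp_0 in H; exact H. Qed.

Lemma c2_lt1 : c2 < 1.
Proof. pose proof e_gt1. nra. Qed.

Lemma p_lt u v : a <= u -> u < v -> v <= B -> p u < p v.
Proof.
  intros. apply (smono p P); auto.
  - intros; apply Hdp; lra.
  - intros; apply Hcp; lra.
  - intros; apply HP; lra.
Qed.

Lemma p_le u v : a <= u -> u <= v -> v <= B -> p u <= p v.
Proof. intros. destruct (Req_dec u v) as [->|]; [lra|]. left; apply p_lt; lra. Qed.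

Lemma p_pos t : a < t <= B -> 0 < p t.
Proof. intros. rewrite <- Hpa. apply p_lt; lra. Qed.

Lemma h_cont t : a <= t <= B -> continuity_pt h t.
Proof. intros. unfold h. apply (continuity_pt_div Q P); auto. specialize (HP t H); intro; lra. Qed.

Lemma A_cont t : a < t <= B -> continuity_pt A t.
Proof. intros. unfold A. apply (continuity_pt_div q p); try (apply Hcq || apply Hcp); try lra.
  specialize (p_pos t H); intro; lra. Qed.

Lemma D_cont t : a < t <= B -> continuity_pt D t.
Proof. intros. unfold D. apply (continuity_pt_minus h A); [apply h_cont; lra| apply A_cont; lra]. Qed.

Lemma ne_eq t xi : a < t <= B -> a <= xi <= B -> Q xi * p t <> q t * P xi -> h xi - A t <> 0.
Proof.
  intros H1 H2 H3 H4. apply H3. pose proof (p_pos t H1). pose proof (HP xi H2).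
  unfold h, A in H4. apply Rminus_diag_uniq in H4.
  field_simplify in H4; try lra. 
  apply (f_equal (fun z => z * (P xi * p t))) in H4.
  field_simplify in H4; lra.
Qed.

Lemma D_ne t : a < t < B -> D t <> 0.
Proof.
  intros. unfold D. apply ne_eq; try lra. apply Hyp; try lra.
  pose proof (p_pos t (conj (proj1 H) (Rlt_le _ _ (proj2 H)))). pose proof c2_lt1. nra.
Qed.


Lemma D_deriv t : a < t < B -> is_derive A t (P t / p t * D t).
Proof.
  intros Ht. pose proof (p_pos t (conj (proj1 Ht) (Rlt_le _ _ (proj2 Ht)))).
  pose proof (HP t (conj (Rlt_le _ _ (proj1 Ht)) (Rlt_le _ _ (proj2 Ht)))).
  pose proof (is_derive_div q p t (Q t) (P t) (Hdq t Ht) (Hdp t Ht) ltac:(intro; lra)) as Hd.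
  unfold A. replace (P t / p t * D t) with ((Q t * p t - q t * P t) / p t ^ 2). exact Hd.
  unfold D, h, A. field. split; intro; lra.
Qed.

Section Pos.
Hypothesis HDU : 0 < D ((a+B)/2).

Lemma D_pos t : a < t < B -> 0 < D t.
Proof.
  intros Ht. destruct (Rle_or_lt t ((a+B)/2)).
  - apply (nosign D t ((a+B)/2)); auto.
    + intros; apply D_cont; lra.
    + intros; apply D_ne; lra.
  - apply (nosign' D ((a+B)/2) t); auto; try lra.
    + intros; apply D_cont; lra.
    + intros; apply D_ne; lra.
Qed.

Lemma step2 t xi : a < t < B -> a < xi <= t -> c1 * p t < p xi -> A t < h xi.
Proof.
  intros Ht Hxi Hc.
  assert (0 < (fun z => h z - A t) xi); [|simpl in *; lra].
  apply (nosign (fun z => h z - A t) xi t); try lra.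
  - intros; apply (continuity_pt_minus h (fun _ => A t)). apply h_cont; lra. apply continuity_pt_const. intros u v; reflexivity.
  - intros z Hz. apply ne_eq; try lra. apply Hyp; try lra.
    assert (p xi <= p z) by (apply p_le; lra). lra.
  - apply (D_pos t Ht).
Qed.

Lemma core_pos : False.
Proof.
  set (U := (a+B)/2).
  assert (HU : a < U < B) by (unfold U; lra).
  assert (HpU : 0 < p U) by (apply p_pos; lra).
  pose proof c2_lt1 as Hc21.
  destruct (IVT_interv (fun z => p z - c2 * p U) a U) as [tU [HtU1 HtU2]]; try lra.
  { intros; apply (continuity_pt_minus p (fun _ => c2 * p U)). apply Hcp; lra. apply continuity_pt_const; intros u v; reflexivity. }
  { rewrite Hpa. nra. }
  { nra. }
  simpl in HtU2.
  assert (HtUa : a < tU).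
  { destruct (Req_dec tU a) as [->|]; [|lra]. rewrite Hpa in HtU2. nra. }
  destruct (continuity_ab_min D tU U) as [xm [Hxm1 Hxm2]]; try lra.
  { intros; apply D_cont; lra. }
  set (mU := D xm).
  assert (HmU : 0 < mU) by (apply D_pos; lra).
  assert (Hclaim : forall t0, a < t0 <= U -> mU <= D t0).
  { intros t0 Ht0. destruct (Rle_or_lt tU t0). apply Hxm1; lra.
    destruct (continuity_ab_min D t0 U) as [p0 [Hp1 Hp2]]; try lra.
    { intros; apply D_cont; lra. }
    destruct (Rle_or_lt tU p0).
    { apply Rle_trans with (D p0). apply Hxm1; lra. apply Hp1; lra. }
    exfalso.
    assert (Hpp0 : p p0 < c2 * p U).
    { assert (p p0 < p tU) by (apply p_lt; lra). lra. }
    assert (Hp0pos : 0 < p p0) by (apply p_pos; lra).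
    set (m := D p0).
    assert (Hm : 0 < m) by (apply D_pos; lra).
    assert (Hdiv : p p0 / c2 * c2 = p p0) by (field; lra).
    destruct (IVT_interv (fun z => p z - p p0 / c2) p0 U) as [s [Hs1 Hs2]]; try lra.
    { intros; apply (continuity_pt_minus p (fun _ => p p0 / c2)). apply Hcp; lra. apply continuity_pt_const; intros u v; reflexivity. }
    { nra. }
    { nra. }
    simpl in Hs2.
    assert (Hps : p s = p p0 / c2) by lra.
    assert (Hsp0 : p0 < s).
    { destruct (Req_dec s p0) as [->|]; [|lra]. nra. }
    set (Phi := fun y => A y - m * ln (p y)).
    assert (HPhi : Phi p0 <= Phi s).
    { apply (mono Phi (fun y => P y / p y * D y - m * (P y / p y))); try lra.
      - intros y Hy. assert (Hpy : 0 < p y) by (apply p_pos; lra).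
        apply der_minus. apply D_deriv; lra.
        apply is_derive_scal.
        pose proof (is_derive_comp ln p y (/ p y) (P y) (is_derive_ln _ Hpy) (Hdp y ltac:(lra))) as Hc.
        exact Hc.
      - intros y Hy. assert (Hpy : 0 < p y) by (apply p_pos; lra).
        apply (der_cont _ _ (P y / p y * D y - m * (P y / p y))).
        apply der_minus. apply D_deriv; lra.
        apply is_derive_scal.
        exact (is_derive_comp ln p y (/ p y) (P y) (is_derive_ln _ Hpy) (Hdp y ltac:(lra))).
      - intros y Hy. assert (Hpy : 0 < p y) by (apply p_pos; lra).
        assert (HPy : 0 < P y) by (apply HP; lra).
        assert (m <= D y) by (apply Hp1; lra).
        assert (0 < P y / p y) by (apply Rdiv_lt_0_compat; lra).
        nra. }
    unfold Phi in HPhi.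
    assert (HL : ln (p s) = ln (p p0) + ln (/ c2)).
    { rewrite Hps. unfold Rdiv. apply ln_mult; auto. apply Rinv_0_lt_compat; lra. }
    assert (HL1 : 1 < ln (/ c2)).
    { rewrite ln_Rinv by lra.
      assert (ln c2 < ln (/ exp 1)).
      { apply ln_increasing; try lra. pose proof e_gt1.
        apply (Rmult_lt_reg_r (exp 1)); try lra. rewrite Rinv_l; lra. }
      rewrite ln_Rinv in H1 by apply exp_pos. rewrite ln_exp in H1. lra. }
    assert (Hst : A s < h p0).
    { apply step2; try lra. assert (0 < p s) by (apply p_pos; lra).
      assert (p p0 = c2 * p s) by (rewrite Hps; field; lra). nra. }
    assert (D p0 = h p0 - A p0) by reflexivity.
    rewrite HL in HPhi. fold m in H1. nra. }
  assert (Hha : h a = 0) by (unfold h; rewrite HQa; unfold Rdiv; ring).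
  destruct (cont_eps h a (h_cont a ltac:(lra)) (mU/3) ltac:(lra)) as [d [Hd Hhd]].
  set (t0 := Rmin U (a + d/2)).
  assert (Ht0 : a < t0 <= U) by (unfold t0; split; [apply Rmin_glb_lt; lra | apply Rmin_l]).
  assert (Ht0d : t0 <= a + d/2) by apply Rmin_r.
  assert (Hhz : forall z, a <= z <= t0 -> Rabs (h z) < mU/3).
  { intros z Hz. rewrite <- (Rminus_0_r (h z)), <- Hha. apply Hhd. rewrite Rabs_right; lra. }
  assert (HQh : forall z, a <= z <= B -> Q z = h z * P z).
  { intros z Hz. unfold h. field. specialize (HP z Hz). lra. }
  assert (H1 : mU/3 * p a - q a <= mU/3 * p t0 - q t0).
  { apply (mono (fun z => mU/3 * p z - q z) (fun z => mU/3 * P z - Q z)); try lra.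
    - intros z Hz. apply der_minus. apply is_derive_scal. apply Hdp; lra. apply Hdq; lra.
    - intros z Hz. apply (continuity_pt_minus (fun z => mU/3 * p z) q).
      apply (continuity_pt_mult (fun _ => mU/3) p). apply continuity_pt_const; intros u v; reflexivity.
      apply Hcp; lra. apply Hcq; lra.
    - intros z Hz. rewrite HQh by lra. specialize (Hhz z Hz). specialize (HP z ltac:(lra)).
      apply Rabs_def2 in Hhz. nra. }
  assert (H2 : mU/3 * p a + q a <= mU/3 * p t0 + q t0).
  { apply (mono (fun z => mU/3 * p z + q z) (fun z => mU/3 * P z + Q z)); try lra.
    - intros z Hz. apply der_plus. apply is_derive_scal. apply Hdp; lra. apply Hdq; lra.
    - intros z Hz. apply (continuity_pt_plus (fun z => mU/3 * p z) q).
      apply (continuity_pt_mult (fun _ => mU/3) p). apply continuity_pt_const; intros u v; reflexivity.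
      apply Hcp; lra. apply Hcq; lra.
    - intros z Hz. rewrite HQh by lra. specialize (Hhz z Hz). specialize (HP z ltac:(lra)).
      apply Rabs_def2 in Hhz. nra. }
  rewrite Hpa, Hqa in H1, H2.
  assert (Hpt0 : 0 < p t0) by (apply p_pos; lra).
  assert (HqA : q t0 = A t0 * p t0) by (unfold A; field; lra).
  specialize (Hclaim t0 Ht0). specialize (Hhz t0 ltac:(lra)). apply Rabs_def2 in Hhz.
  assert (D t0 = h t0 - A t0) by reflexivity.
  rewrite HqA in H1, H2. nra.
Qed.
End Pos.
End CoreSec.

Lemma core (a B c1 c2 : R) (p q P Q : R -> R) :
  a < B -> 0 < c1 -> c1 < c2 -> c2 * exp 1 < 1 ->
  (forall t, a <= t <= B -> continuity_pt p t) ->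
  (forall t, a <= t <= B -> continuity_pt q t) ->
  (forall t, a <= t <= B -> continuity_pt P t) ->
  (forall t, a <= t <= B -> continuity_pt Q t) ->
  (forall t, a < t < B -> is_derive p t (P t)) ->
  (forall t, a < t < B -> is_derive q t (Q t)) ->
  (forall t, a <= t <= B -> 0 < P t) ->
  p a = 0 -> q a = 0 -> Q a = 0 ->
  (forall t xi, a < t < B -> a < xi <= t -> c1 * p t < p xi ->
    Q xi * p t <> q t * P xi) -> False.
Proof.
  intros. set (U := (a+B)/2).
  assert (HU : a < U < B) by (unfold U; lra).
  assert (Hne : Q U / P U - q U / p U <> 0).
  { apply (ne_eq a B p q P Q); auto; try lra.
    apply H13; try lra.
    pose proof (p_pos a B p P H3 H7 H9 H10 U ltac:(lra)).
    pose proof (c2_lt1 c1 c2 H0 H1 H2). nra. }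
  destruct (Rlt_or_le 0 (Q U / P U - q U / p U)).
  - eapply (core_pos a B c1 c2 p q P Q); eauto.
  - apply (core_pos a B c1 c2 p (fun t => - q t) P (fun t => - Q t)); auto.
    + intros; apply (continuity_pt_opp q); auto.
    + intros; apply (continuity_pt_opp Q); auto.
    + intros; apply der_opp; auto.
    + rewrite H11; ring.
    + rewrite H12; ring.
    + intros t xi G1 G2 G3 Heq. apply (H13 t xi G1 G2 G3). lra.
    + fold U. unfold Rdiv in *. assert (Q U * / P U - q U * / p U < 0) by lra. lra.
Qed.


Definition cl (a b s : R) := Rmax a (Rmin b s).

Lemma cl_in a b s : a <= b -> a <= cl a b s <= b.
Proof. intros. unfold cl, Rmax, Rmin; repeat destruct Rle_dec; lra. Qed.
Lemma cl_id a b s : a <= s <= b -> cl a b s = s.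
Proof. intros. unfold cl, Rmax, Rmin; repeat destruct Rle_dec; lra. Qed.
Lemma cl_lip a b z s : a <= b -> Rabs (cl a b z - cl a b s) <= Rabs (z - s).
Proof. intros. unfold cl, Rmax, Rmin; repeat destruct Rle_dec; unfold Rabs; repeat destruct Rcase_abs; lra. Qed.

Lemma ballR x e y : ball x e y <-> Rabs (y - x) < e.
Proof. unfold ball; simpl; unfold AbsRing_ball, abs, minus, plus, opp; simpl. tauto. Qed.

Lemma eps_cont f x : (forall e, 0 < e -> exists d, 0 < d /\ forall y, Rabs (y - x) < d -> Rabs (f y - f x) < e) -> continuity_pt f x.
Proof.
  intros H e He. destruct (H e He) as [d [Hd H']]. exists d; split; auto.
  intros y [_ Hy]. apply H'. exact Hy.
Qed.

Lemma cont_on_eps a b g t : cont_on a b g t -> forall e, 0 < e ->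
  exists d, 0 < d /\ forall y, in_Icc a b y -> Rabs (y - t) < d -> Rabs (g y - g t) < e.
Proof.
  intros H e He. destruct (proj1 (filterlim_locally _ _) H (mkposreal e He)) as [d Hd].
  exists d; split; [apply cond_pos|]. intros y Hy Hyd.
  apply ballR. apply Hd. apply ballR; exact Hyd. exact Hy.
Qed.

Lemma deriv_eps a b f t df : has_deriv_on a b f t df -> forall e, 0 < e ->
  exists d, 0 < d /\ forall y, in_Icc a b y -> y <> t -> Rabs (y - t) < d ->
    Rabs ((f y - f t) / (y - t) - df) < e.
Proof.
  intros H e He. destruct (proj1 (filterlim_locally _ _) H (mkposreal e He)) as [d Hd].
  exists d; split; [apply cond_pos|]. intros y Hy Hne Hyd.
  apply ballR. apply Hd. apply ballR; exact Hyd. exact (conj Hy Hne).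
Qed.

Lemma deriv_within_eps a b f t df : has_deriv_on a b f t df -> forall e, 0 < e ->
  exists d, 0 < d /\ forall y, in_Icc a b y -> Rabs (y - t) < d -> Rabs (f y - f t) < e.
Proof.
  intros H e He. destruct (deriv_eps a b f t df H 1 ltac:(lra)) as [d [Hd H']].
  set (K := Rabs df + 1).
  assert (HK : 0 < K) by (unfold K; pose proof (Rabs_pos df); lra).
  exists (Rmin d (e / K)); split. apply Rmin_glb_lt; auto. apply Rdiv_lt_0_compat; lra.
  intros y Hy Hyd. destruct (Req_dec y t) as [->|Hne].
  - rewrite Rminus_eq_0, Rabs_R0; lra.
  - assert (Hyd1 : Rabs (y - t) < d) by (eapply Rlt_le_trans; [exact Hyd| apply Rmin_l]).
    assert (Hyd2 : Rabs (y - t) < e / K) by (eapply Rlt_le_trans; [exact Hyd| apply Rmin_r]).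
    specialize (H' y Hy Hne Hyd1).
    assert (Hq : Rabs ((f y - f t) / (y - t)) < K).
    { unfold K. pose proof (Rabs_triang_inv ((f y - f t) / (y - t)) df). lra. }
    replace (f y - f t) with ((f y - f t) / (y - t) * (y - t)) by (field; lra).
    rewrite Rabs_mult.
    assert (0 < Rabs (y - t)) by (apply Rabs_pos_lt; lra).
    apply Rlt_le_trans with (K * Rabs (y - t)). apply Rmult_lt_compat_r; auto.
    apply Rlt_le in Hyd2. apply (Rmult_le_compat_l K) in Hyd2; [|lra].
    replace (K * (e / K)) with e in Hyd2 by (field; lra). lra.
Qed.

Lemma clamp_cont a b f : a <= b ->
  (forall t, in_Icc a b t -> forall e, 0 < e ->
    exists d, 0 < d /\ forall y, in_Icc a b y -> Rabs (y - t) < d -> Rabs (f y - f t) < e) ->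
  forall s, continuity_pt (fun s => f (cl a b s)) s.
Proof.
  intros Hab H s. apply eps_cont. intros e He.
  destruct (H (cl a b s) (cl_in a b s Hab) e He) as [d [Hd H']].
  exists d; split; auto. intros y Hy. apply H'. apply cl_in; auto.
  eapply Rle_lt_trans; [apply cl_lip; auto| exact Hy].
Qed.

Lemma clamp_deriv a b f t df : a < t < b -> has_deriv_on a b f t df ->
  is_derive (fun s => f (cl a b s)) t df.
Proof.
  intros Ht H. apply is_derive_Reals. intros e He.
  destruct (deriv_eps a b f t df H e He) as [d [Hd H']].
  assert (Hpos : 0 < Rmin d (Rmin (t - a) (b - t))).
  { apply Rmin_glb_lt; auto. apply Rmin_glb_lt; lra. }
  exists (mkposreal _ Hpos). intros h Hh Hhd. simpl in Hhd.
  assert (h1 : Rabs h < d) by (eapply Rlt_le_trans; [exact Hhd| apply Rmin_l]).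
  assert (h2 : Rabs h < Rmin (t - a) (b - t)) by (eapply Rlt_le_trans; [exact Hhd| apply Rmin_r]).
  assert (h3 : Rabs h < t - a) by (eapply Rlt_le_trans; [exact h2| apply Rmin_l]).
  assert (h4 : Rabs h < b - t) by (eapply Rlt_le_trans; [exact h2| apply Rmin_r]).
  apply Rabs_def2 in h3. apply Rabs_def2 in h4.
  rewrite (cl_id a b (t + h)) by lra. rewrite (cl_id a b t) by lra.
  specialize (H' (t + h)). replace (t + h - t) with h in H' by ring.
  apply H'; auto. split; lra. lra.
Qed.

Lemma collin u1 u2 v1 v2 : u1 * v2 - u2 * v1 = 0 -> (v1 <> 0 \/ v2 <> 0) -> collinear u1 u2 v1 v2.
Proof.
  intros H Hv. destruct (Req_dec v1 0) as [Hv1|Hv1].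
  - exists v2, (- u2). split. destruct Hv; [contradiction|left; auto]. subst. split; nra.
  - exists v1, (- u1). split. left; auto. split; nra.
Qed.

Lemma der_const (c t : R) : is_derive (fun _ => c) t 0.
Proof. exact (is_derive_const (K:=R_AbsRing) (V:=R_NormedModule) c t). Qed.

Lemma cont_lin f g u v s : continuity_pt f s -> continuity_pt g s ->
  continuity_pt (fun s => u * f s + v * g s) s.
Proof.
  intros. apply (continuity_pt_plus (fun s => u * f s) (fun s => v * g s)).
  apply (continuity_pt_mult (fun _ => u) f); auto. apply continuity_pt_const; intros ? ?; reflexivity.
  apply (continuity_pt_mult (fun _ => v) g); auto. apply continuity_pt_const; intros ? ?; reflexivity.
Qed.

Lemma der_lin f g u v s df dg : is_derive f s df -> is_derive g s dg ->
  is_derive (fun s => u * f s + v * g s) s (u * df + v * dg).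
Proof. intros. apply der_plus; apply is_derive_scal; auto. Qed.

Lemma mult_minf_ne z r : z <> 0 -> Rbar_mult m_infty (Finite z) <> Finite r.
Proof.
  intros Hz. unfold Rbar_mult, Rbar_mult'. destruct (Rle_dec 0 z).
  - destruct (Rle_lt_or_eq_dec 0 z r0); [discriminate| congruence].
  - discriminate.
Qed.

Section CurveSec.
Variables (a b : R) (x y dx dy : R -> R).
Hypothesis Hab : a < b.
Hypothesis Hdx : forall t, in_Icc a b t -> has_deriv_on a b x t (dx t).
Hypothesis Hdy : forall t, in_Icc a b t -> has_deriv_on a b y t (dy t).
Hypothesis Hcdx : forall t, in_Icc a b t -> cont_on a b dx t.
Hypothesis Hcdy : forall t, in_Icc a b t -> cont_on a b dy t.
Hypothesis Hreg : forall t, in_Icc a b t -> dx t <> 0 \/ dy t <> 0.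

Let X s := x (cl a b s) - x a.
Let Y s := y (cl a b s) - y a.
Let DX s := dx (cl a b s).
Let DY s := dy (cl a b s).
Let I s := sqrt (DX s ^ 2 + DY s ^ 2).
Let Lc t := RInt I a t.

Lemma DX_cont s : continuity_pt DX s.
Proof. apply (clamp_cont a b dx); [lra|]. intros; apply cont_on_eps; auto. Qed.
Lemma DY_cont s : continuity_pt DY s.
Proof. apply (clamp_cont a b dy); [lra|]. intros; apply cont_on_eps; auto. Qed.

Lemma X_cont s : continuity_pt X s.
Proof. apply (continuity_pt_minus (fun s => x (cl a b s)) (fun _ => x a)).
  apply (clamp_cont a b x); [lra|]. intros; eapply deriv_within_eps; eauto.
  apply continuity_pt_const; intros ? ?; reflexivity. Qed.
Lemma Y_cont s : continuity_pt Y s.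
Proof. apply (continuity_pt_minus (fun s => y (cl a b s)) (fun _ => y a)).
  apply (clamp_cont a b y); [lra|]. intros; eapply deriv_within_eps; eauto.
  apply continuity_pt_const; intros ? ?; reflexivity. Qed.

Lemma X_der t : a < t < b -> is_derive X t (DX t).
Proof. intros. unfold X, DX. rewrite (cl_id a b t) by lra. replace (dx t) with (dx t - 0) by ring.
  apply der_minus. apply clamp_deriv; auto. apply Hdx. unfold in_Icc; lra. apply der_const. Qed.
Lemma Y_der t : a < t < b -> is_derive Y t (DY t).
Proof. intros. unfold Y, DY. rewrite (cl_id a b t) by lra. replace (dy t) with (dy t - 0) by ring.
  apply der_minus. apply clamp_deriv; auto. apply Hdy. unfold in_Icc; lra. apply der_const. Qed.

Lemma I_pos s : 0 < I s.
Proof. unfold I, DX, DY. apply sqrt_lt_R0.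
  destruct (Hreg (cl a b s) (cl_in a b s ltac:(lra))); nra. Qed.

Lemma I_cont s : continuity_pt I s.
Proof. unfold I. apply continuity_pt_comp with (f1 := fun s => DX s ^ 2 + DY s ^ 2) (f2 := sqrt).
  apply (continuity_pt_plus (fun s => DX s ^ 2) (fun s => DY s ^ 2)).
  apply (continuity_pt_mult DX (fun s => DX s ^ 1)). apply DX_cont.
  apply (continuity_pt_mult DX (fun _ => 1)). apply DX_cont. apply continuity_pt_const; intros ? ?; reflexivity.
  apply (continuity_pt_mult DY (fun s => DY s ^ 1)). apply DY_cont.
  apply (continuity_pt_mult DY (fun _ => 1)). apply DY_cont. apply continuity_pt_const; intros ? ?; reflexivity.
  apply continuity_pt_sqrt. nra.
Qed.


Lemma Lc_der t : is_derive Lc t (I t).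
Proof.
  apply (is_derive_RInt I Lc a t).
  - apply filter_forall. intros b0. apply (RInt_correct (V:=R_CompleteNormedModule)). apply (ex_RInt_continuous (V:=R_CompleteNormedModule)).
    intros z _. apply continuity_pt_filterlim, I_cont.
  - apply continuity_pt_filterlim, I_cont.
Qed.

Lemma Lc_cont t : continuity_pt Lc t.
Proof. apply (der_cont _ _ (I t)). apply Lc_der. Qed.

Lemma Lc_a : Lc a = 0.
Proof. unfold Lc. apply (RInt_point (V:=R_CompleteNormedModule)). Qed.

Lemma Lc_lt u v : u < v -> Lc u < Lc v.
Proof. intros. apply (smono Lc I); auto. intros; apply Lc_der. intros; apply Lc_cont. intros; apply I_pos. Qed.

Lemma Lc_le u v : u <= v -> Lc u <= Lc v.
Proof. intros. destruct (Req_dec u v) as [->|]; [lra|]. left; apply Lc_lt; lra. Qed.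

Lemma arclen_eq t : a <= t <= b -> arclen dx dy a t = Lc t.
Proof.
  intros Ht. unfold arclen, Lc. apply RInt_ext. intros z Hz.
  rewrite Rmin_left, Rmax_right in Hz by lra.
  unfold I, DX, DY. rewrite cl_id by lra. reflexivity.
Qed.

Lemma arclen_pos t : a < t <= b -> 0 < arclen dx dy a t.
Proof. intros. rewrite arclen_eq by lra. rewrite <- Lc_a. apply Lc_lt; lra. Qed.

Lemma supLT_cases t : a < t <= b ->
  (supLT x y dx dy a t = m_infty /\ forall xi, ~ Tset x y dx dy a t xi) \/
  (exists S0, supLT x y dx dy a t = Finite S0 /\ S0 <= arclen dx dy a t /\
     forall xi, Tset x y dx dy a t xi -> arclen dx dy a xi <= S0).
Proof.
  intros Ht. unfold supLT.
  set (E := fun r => exists tau, Tset x y dx dy a t tau /\ r = arclen dx dy a tau).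
  destruct (Lub_Rbar_correct E) as [Hub Hl].
  assert (Hb : Rbar_le (Lub_Rbar E) (arclen dx dy a t)).
  { apply Hl. intros r [tau [Htau ->]]. simpl. destruct Htau as [Htau _].
    rewrite !arclen_eq by lra. apply Lc_le; lra. }
  destruct (classic (exists xi, Tset x y dx dy a t xi)) as [[xi Hxi]|Hn].
  - right. assert (Hx : Rbar_le (arclen dx dy a xi) (Lub_Rbar E)) by (apply Hub; exists xi; auto).
    destruct (Lub_Rbar E) as [S0| |] eqn:HE; simpl in Hx, Hb; try contradiction.
    exists S0; repeat split; auto. intros xi0 Hxi0.
    exact (Hub (arclen dx dy a xi0) (ex_intro _ xi0 (conj Hxi0 eq_refl))).
  - left. split.
    + assert (Hm : Rbar_le (Lub_Rbar E) m_infty).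
      { apply Hl. intros r [tau [Htau _]]. exfalso; apply Hn; eauto. }
      destruct (Lub_Rbar E); simpl in Hm; tauto.
    + intros xi Hxi; apply Hn; eauto.
Qed.


Lemma main_contra delta c : 0 < delta -> 0 < c -> c < / exp 1 ->
  (forall t xi, a < t < Rmin b (a + delta) -> Tset x y dx dy a t xi ->
     arclen dx dy a xi < c * arclen dx dy a t) -> False.
Proof.
  intros Hd Hc Hce Hkey.
  assert (Haa : a <= a <= b) by lra.
  set (e1 := dx a). set (e2 := dy a).
  set (n2 := e1^2 + e2^2).
  assert (Hn2 : 0 < n2).
  { destruct (Hreg a Haa); unfold n2, e1, e2; nra. }
  set (p := fun s => e1 * X s + e2 * Y s).
  set (q := fun s => (-e2) * X s + e1 * Y s).
  set (P := fun s => e1 * DX s + e2 * DY s).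
  set (Q := fun s => (-e2) * DX s + e1 * DY s).
  set (k := sqrt n2).
  assert (Hk : 0 < k) by (apply sqrt_lt_R0; auto).
  pose proof e_gt1 as He1.
  assert (Hie : 0 < / exp 1) by (apply Rinv_0_lt_compat; lra).
  set (c1 := (c + / exp 1)/2). set (c2 := (c1 + / exp 1)/2). set (rho := c1 / c).
  assert (Hrc : rho * c = c1) by (unfold rho; field; lra).
  assert (Hrho : 1 < rho) by (unfold c1 in Hrc; nra).
  assert (Hc2e : c2 * exp 1 < 1).
  { assert (c2 < / exp 1) by (unfold c2, c1; lra).
    apply Rmult_lt_compat_r with (r := exp 1) in H; [|lra].
    rewrite Rinv_l in H; lra. }
  assert (HPc : forall s, continuity_pt P s) by (intros; apply cont_lin; [apply DX_cont|apply DY_cont]).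
  assert (HQc : forall s, continuity_pt Q s) by (intros; apply cont_lin; [apply DX_cont|apply DY_cont]).
  assert (Hpc : forall s, continuity_pt p s) by (intros; apply cont_lin; [apply X_cont|apply Y_cont]).
  assert (Hqc : forall s, continuity_pt q s) by (intros; apply cont_lin; [apply X_cont|apply Y_cont]).
  assert (HPa : P a = n2) by (unfold P, DX, DY; rewrite cl_id by lra; unfold n2, e1, e2; ring).
  assert (HQa : Q a = 0) by (unfold Q, DX, DY; rewrite cl_id by lra; unfold e1, e2; ring).
  assert (Hpa : p a = 0) by (unfold p, X, Y; rewrite cl_id by lra; ring).
  assert (Hqa : q a = 0) by (unfold q, X, Y; rewrite cl_id by lra; ring).
  destruct (cont_eps P a (HPc a) (n2/2) ltac:(lra)) as [d1 [Hd1 HP1]].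
  set (th := (rho - 1) * n2 / 2).
  assert (Hth : 0 < th) by (unfold th; nra).
  destruct (cont_eps Q a (HQc a) th Hth) as [d2 [Hd2 HQ1]].
  set (m := Rmin (Rmin delta (b - a)) (Rmin d1 d2)).
  assert (Hm : 0 < m) by (unfold m; repeat apply Rmin_glb_lt; lra).
  assert (Hm1 : m <= delta) by (unfold m; eapply Rle_trans; [apply Rmin_l| apply Rmin_l]).
  assert (Hm2 : m <= b - a) by (unfold m; eapply Rle_trans; [apply Rmin_l| apply Rmin_r]).
  assert (Hm3 : m <= d1) by (unfold m; eapply Rle_trans; [apply Rmin_r| apply Rmin_l]).
  assert (Hm4 : m <= d2) by (unfold m; eapply Rle_trans; [apply Rmin_r| apply Rmin_r]).
  set (B := a + m / 2).
  assert (HaB : a < B) by (unfold B; lra).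
  assert (HBb : B < b) by (unfold B; lra).
  assert (HBd : B < a + delta) by (unfold B; lra).
  assert (HPpos : forall s, a <= s <= B -> n2 / 2 < P s).
  { intros s Hs. assert (Rabs (s - a) < d1) by (rewrite Rabs_right; unfold B in Hs; lra).
    specialize (HP1 s H). rewrite HPa in HP1. apply Rabs_def2 in HP1. lra. }
  assert (HQs : forall s, a <= s <= B -> Rabs (Q s) < th).
  { intros s Hs. assert (Rabs (s - a) < d2) by (rewrite Rabs_right; unfold B in Hs; lra).
    specialize (HQ1 s H). rewrite HQa, Rminus_0_r in HQ1. exact HQ1. }
  assert (Hsq : forall s, k * I s = sqrt (P s ^ 2 + Q s ^ 2)).
  { intros s. unfold k, I. rewrite <- sqrt_mult_alt by lra. f_equal. unfold P, Q, n2; ring. }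
  assert (Hlow : forall s, P s <= k * I s).
  { intros s. rewrite Hsq. apply Rle_trans with (Rabs (P s)). apply Rle_abs.
    rewrite <- sqrt_Rsqr_abs. apply sqrt_le_1_alt. unfold Rsqr. nra. }
  assert (Hup : forall s, a <= s <= B -> k * I s <= rho * P s).
  { intros s Hs. rewrite Hsq. specialize (HPpos s Hs). specialize (HQs s Hs).
    rewrite <- (sqrt_pow2 (rho * P s)) by nra. apply sqrt_le_1_alt.
    apply Rabs_def2 in HQs.
    assert (Q s ^ 2 < th ^ 2) by nra.
    assert (th < (rho - 1) * P s) by (unfold th; nra).
    assert (th ^ 2 < ((rho - 1) * P s) ^ 2) by nra.
    nra. }
  assert (Hdp : forall t, a < t < B -> is_derive p t (P t)).
  { intros t Ht. unfold p, P. apply der_lin; [apply X_der| apply Y_der]; lra. }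
  assert (Hdq : forall t, a < t < B -> is_derive q t (Q t)).
  { intros t Ht. unfold q, Q. apply der_lin; [apply X_der| apply Y_der]; lra. }
  assert (HPp : forall t, a <= t <= B -> 0 < P t) by (intros t Ht; specialize (HPpos t Ht); lra).
  assert (HpLc : forall u, a <= u <= B -> p u <= k * Lc u).
  { intros u Hu. assert (k * Lc a - p a <= k * Lc u - p u).
    { apply (mono (fun s => k * Lc s - p s) (fun s => k * I s - P s)); try lra.
      - intros s Hs. apply der_minus. apply is_derive_scal. apply Lc_der. apply Hdp; lra.
      - intros s Hs. apply (continuity_pt_minus (fun s => k * Lc s) p); auto.
        apply (continuity_pt_mult (fun _ => k) Lc). apply continuity_pt_const; intros ? ?; reflexivity.
        apply Lc_cont.
      - intros s Hs. specialize (Hlow s). lra. }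
    rewrite Lc_a, Hpa in H. lra. }
  assert (HLcp : forall u, a <= u <= B -> k * Lc u <= rho * p u).
  { intros u Hu. assert (rho * p a - k * Lc a <= rho * p u - k * Lc u).
    { apply (mono (fun s => rho * p s - k * Lc s) (fun s => rho * P s - k * I s)); try lra.
      - intros s Hs. apply der_minus. apply is_derive_scal. apply Hdp; lra. apply is_derive_scal. apply Lc_der.
      - intros s Hs. apply (continuity_pt_minus (fun s => rho * p s) (fun s => k * Lc s)); auto.
        apply (continuity_pt_mult (fun _ => rho) p). apply continuity_pt_const; intros ? ?; reflexivity. auto.
        apply (continuity_pt_mult (fun _ => k) Lc). apply continuity_pt_const; intros ? ?; reflexivity.
        apply Lc_cont.
      - intros s Hs. specialize (Hup s ltac:(lra)). lra. }
    rewrite Lc_a, Hpa in H. lra. }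
  apply (core a B c1 c2 p q P Q); auto; try (unfold c1, c2; lra).
  all: try (intros; apply Hpc). all: try (intros; apply Hqc).
  all: try (intros; apply HPc). all: try (intros; apply HQc).
  { unfold c2; unfold c1; lra. }
  - intros t xi Ht Hxi Hc1' Heq.
    assert (Hpt : 0 < p t) by (apply (p_pos a B p P); auto; try lra).
    assert (Hid : Q xi * p t - q t * P xi = n2 * (DY xi * X t - DX xi * Y t))
      by (unfold Q, P, p, q, n2; ring).
    assert (Hcr : DY xi * X t - DX xi * Y t = 0).
    { rewrite Heq, Rminus_eq_0 in Hid. symmetry in Hid. apply Rmult_integral in Hid. destruct Hid; [lra|auto]. }
    unfold DX, DY, X, Y in Hcr. rewrite !(cl_id a b) in Hcr by lra.
    assert (HT : Tset x y dx dy a t xi).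
    { split; [lra|]. apply collin. lra.
      destruct (Req_dec (x t - x a) 0) as [H0|H0]; [|left; auto].
      destruct (Req_dec (y t - y a) 0) as [H1|H1]; [|right; auto].
      exfalso. unfold p, X, Y in Hpt. rewrite (cl_id a b t) in Hpt by lra.
      rewrite H0, H1 in Hpt. lra. }
    assert (Ht' : a < t < Rmin b (a + delta)) by (split; [lra| apply Rmin_glb_lt; lra]).
    specialize (Hkey t xi Ht' HT). rewrite !arclen_eq in Hkey by lra.
    specialize (HpLc xi ltac:(lra)). specialize (HLcp t ltac:(lra)).
    assert (k * Lc xi < k * (c * Lc t)) by (apply Rmult_lt_compat_l; auto).
    assert (c * (k * Lc t) <= c * (rho * p t)) by (apply Rmult_le_compat_l; lra).
    nra.
Qed.

End CurveSec.


Theorem corollary2 (a b : R) (x y dx dy : R -> R) :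
  a < b ->
  (forall t, in_Icc a b t -> has_deriv_on a b x t (dx t)) ->
  (forall t, in_Icc a b t -> has_deriv_on a b y t (dy t)) ->
  (forall t, in_Icc a b t -> cont_on a b dx t) ->
  (forall t, in_Icc a b t -> cont_on a b dy t) ->
  (forall t, in_Icc a b t -> dx t <> 0 \/ dy t <> 0) ->
  Rbar_le (Finite (/ exp 1))
    (limsup_right
       (fun t => Rbar_div (supLT x y dx dy a t) (arclen dx dy a t)) a b).
Proof.
  intros Hab Hdx Hdy Hcdx Hcdy Hreg.
  unfold limsup_right.
  match goal with |- Rbar_le _ (Glb_Rbar ?S) => destruct (Glb_Rbar_correct S) as [_ Hg] end.
  apply Hg. intros s [delta [Hdelta ->]].
  match goal with |- Rbar_le _ (Finite (real (Lub_Rbar ?E))) =>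
    destruct (Lub_Rbar_correct E) as [Hub Hl]; set (EE := E) in * end.
  pose proof e_gt1 as He1.
  assert (Hie : 0 < / exp 1) by (apply Rinv_0_lt_compat; lra).
  assert (Hrange : forall t, a < t < Rmin b (a + delta) -> a < t <= b).
  { intros t Ht. assert (Rmin b (a + delta) <= b) by apply Rmin_l. lra. }
  assert (Hfin : forall t xi, a < t < Rmin b (a + delta) -> Tset x y dx dy a t xi ->
     exists S0, Rbar_div (supLT x y dx dy a t) (arclen dx dy a t) = Finite (S0 / arclen dx dy a t)
       /\ arclen dx dy a xi <= S0).
  { intros t xi Ht HT.
    destruct (supLT_cases a b x y dx dy Hab Hcdx Hcdy Hreg t (Hrange t Ht)) as [[_ Hn]|[S0 [HS [_ HS2]]]].
    - exfalso; apply (Hn xi HT).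
    - exists S0. rewrite HS. split; [reflexivity| apply HS2; auto]. }
  assert (Hle1 : Rbar_le (Lub_Rbar EE) 1).
  { apply Hl. intros r [t [Ht Hr]]. simpl.
    pose proof (arclen_pos a b dx dy Hab Hcdx Hcdy Hreg t (Hrange t Ht)) as HL.
    destruct (supLT_cases a b x y dx dy Hab Hcdx Hcdy Hreg t (Hrange t Ht)) as [[Hm _]|[S0 [HS [HS1 _]]]].
    - rewrite Hm in Hr. exfalso. unfold Rbar_div in Hr. simpl Rbar_inv in Hr.
      apply (mult_minf_ne (/ arclen dx dy a t) r). apply Rinv_neq_0_compat; lra. auto.
    - rewrite HS in Hr. unfold Rbar_div in Hr. simpl in Hr. injection Hr as Hr.
      assert (r * arclen dx dy a t = S0) by (rewrite Hr; field; lra). nra. }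
  destruct (Lub_Rbar EE) as [l0| |] eqn:HE; simpl in Hle1 |- *.
  - destruct (Rle_lt_dec (/ exp 1) l0) as [|Hlt]; auto. exfalso.
    apply (main_contra a b x y dx dy Hab Hdx Hdy Hcdx Hcdy Hreg delta ((Rmax l0 0 + / exp 1)/2)); auto.
    + pose proof (Rmax_r l0 0). lra.
    + assert (Rmax l0 0 < / exp 1) by (apply Rmax_lub_lt; lra). lra.
    + intros t xi Ht HT. destruct (Hfin t xi Ht HT) as [S0 [Hf HS]].
      pose proof (arclen_pos a b dx dy Hab Hcdx Hcdy Hreg t (Hrange t Ht)) as HL.
      assert (Hr : Rbar_le (S0 / arclen dx dy a t) l0).
      { apply Hub. exists t. split; auto. }
      simpl in Hr. pose proof (Rmax_l l0 0).
      assert (S0 / arclen dx dy a t * arclen dx dy a t = S0) by (field; lra).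
      nra.
  - contradiction.
  - exfalso.
    apply (main_contra a b x y dx dy Hab Hdx Hdy Hcdx Hcdy Hreg delta (/ exp 1 / 2)); auto; try lra.
    intros t xi Ht HT. destruct (Hfin t xi Ht HT) as [S0 [Hf HS]].
    assert (Hr : Rbar_le (S0 / arclen dx dy a t) m_infty).
    { apply Hub. exists t. split; auto. }
    simpl in Hr. contradiction.
Qed.
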